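(* For all $0<x,y\le1$, $$\frac{|K_2(x,y)|}{x}\le\frac1{12}+\frac{x}{(36\sqrt3)\,y}+\frac1{2y^2}\Big|\sum_{m>1/y}\frac{\widetilde B_2\left(\frac{my}{x}\right)}{m^2}\Big|$$ (the sum over integers $m>1/y$), $$|K_2(x,y)|\le\Big(\frac14+\frac1{36\sqrt3}\Big)\frac{\min\{x,y\}}{\max\{x,y\}},$$ and $$\Big|K_2(x,x)-\frac1{12}\Big|\le\Big(\frac16+\frac1{36\sqrt3}\Big)x.$$
   Context: Let $K:[0,1]\times[0,1]\to\mathbb R$ be defined by $K(x,y)=\frac12-\{(xy)^{-1}\}$ if $0<x,y\le 1$, and $K(x,y)=0$ if $0\le x,y\le1$ and $xy=0$, where $\{\alpha\}=\alpha-\lfloor\alpha\rfloor$. Define $K_2(x,y)=\int_0^1K(x,z)K(z,y)\,dz$ for $0\le x,y\le1$. The periodic Bernoulli function is $\widetilde B_2(t)=\{t\}^2-\{t\}+\frac16$ for $t\in\mathbb R$. *)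

(* Defs.v *)
From Stdlib Require Import Reals.
From Coquelicot Require Import Coquelicot.
Open Scope R_scope.

(* {a} = a - floor a ; Stdlib's Int_part is the floor. *)
Definition frac (a : R) : R := a - IZR (Int_part a).

(* K(x,y) = 1/2 - {1/(xy)} if xy <> 0, and 0 if xy = 0
   (only values on [0,1]^2 matter). *)
Definition K (x y : R) : R :=
  if Req_EM_T (x * y) 0 then 0 else 1/2 - frac (/ (x * y)).

Definition K2 (x y : R) : R := RInt (fun z => K x z * K z y) 0 1.

Definition B2t (t : R) : R := (frac t)^2 - frac t + 1/6.

Definition tail_sum (x y : R) : R :=
  Series (fun m : nat =>
    if Rlt_dec (/ y) (INR m) then B2t (INR m * y / x) / (INR m)^2 else 0).

(* Main.v *)
From Stdlib Require Import Reals Lra Lia Psatz ZArith.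
From Coquelicot Require Import Coquelicot.
Require Import Defs.
Open Scope R_scope.

Lemma Int_part_unique (k : Z) (t : R) : IZR k <= t < IZR k + 1 -> Int_part t = k.
Proof.
  intros [H1 H2]. destruct (base_Int_part t) as [B1 B2].
  assert (IZR k < IZR (Int_part t + 1)) by (rewrite plus_IZR; lra).
  assert (IZR (Int_part t) < IZR (k + 1)) by (rewrite plus_IZR; lra).
  apply lt_IZR in H. apply lt_IZR in H0. lia.
Qed.

Lemma Int_part_spec (t : R) : IZR (Int_part t) <= t < IZR (Int_part t) + 1.
Proof. destruct (base_Int_part t); lra. Qed.

Lemma Int_part_ge (k : Z) (t : R) : IZR k <= t -> (k <= Int_part t)%Z.
Proof.
  intros H. destruct (Int_part_spec t).
  assert (IZR k < IZR (Int_part t + 1)) by (rewrite plus_IZR; lra).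
  apply lt_IZR in H2. lia.
Qed.


Lemma glue (x : R) (Rp : R -> R -> Prop) : 0 < x ->
  (forall a b c, 0 < a -> a <= b <= c -> Rp a b -> Rp b c -> Rp a c) ->
  (forall (k : Z) a b, 0 < a <= b -> IZR k <= / (x * b) -> / (x * a) <= IZR k + 1 -> Rp a b) ->
  forall a b, 0 < a <= b -> Rp a b.
Proof.
  intros Hx HC HP.
  assert (main : forall n a b, 0 < a <= b ->
     (Int_part (/ (x * a)) - Int_part (/ (x * b)) <= Z.of_nat n)%Z -> Rp a b).
  { induction n as [|n IH]; intros a b Hab Hd.
    - set (k := Int_part (/ (x * b))).
      destruct (Int_part_spec (/ (x * b))) as [K1 K2]. fold k in K1, K2.
      apply (HP k); auto.
      destruct (Rle_lt_dec (/ (x * a)) (IZR k + 1)) as [h|h]; auto.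
      exfalso. assert (Hk : (k + 1 <= Int_part (/ (x * a)))%Z).
      { apply Int_part_ge. rewrite plus_IZR. change (IZR 1) with 1. lra. }
      unfold k in Hk. lia.
    - set (k := Int_part (/ (x * b))).
      destruct (Int_part_spec (/ (x * b))) as [K1 K2]. fold k in K1, K2.
      destruct (Rle_lt_dec (/ (x * a)) (IZR k + 1)) as [h|h].
      + apply (HP k); auto.
      + assert (kpos : 0 < IZR k + 1).
        { assert (0 < / (x * b)) by (apply Rinv_0_lt_compat; nra). lra. }
        set (c := / (x * (IZR k + 1))).
        assert (Hc : / (x * c) = IZR k + 1) by (unfold c; field; lra).
        assert (Hcpos : 0 < c) by (unfold c; apply Rinv_0_lt_compat; nra).
        assert (Hac : a < c).
        { destruct (Rle_lt_dec c a) as [h'|h']; auto. exfalso.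
          assert (/ (x * a) <= / (x * c)) by (apply Rinv_le_contravar; nra). lra. }
        assert (Hcb : c < b).
        { destruct (Rle_lt_dec b c) as [h'|h']; auto. exfalso.
          assert (/ (x * c) <= / (x * b)) by (apply Rinv_le_contravar; nra). lra. }
        apply (HC a c b); [lra|lra| |].
        * apply IH; [lra|]. rewrite Hc.
          rewrite (Int_part_unique (k+1) (IZR k + 1)). 2:{ rewrite plus_IZR; change (IZR 1) with 1; lra. }
          fold k in Hd. lia.
        * apply (HP k); [lra|lra|]. rewrite Hc; lra. }
  intros a b Hab. apply (main (Z.to_nat (Int_part (/ (x * a)) - Int_part (/ (x * b))))); auto.
  set (z := (Int_part (/ (x * a)) - Int_part (/ (x * b)))%Z).
  destruct (Z.le_ge_cases 0 z) as [h|h].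
  - rewrite Z2Nat.id; lia.
  - lia.
Qed.

Lemma frac_eq (k : Z) (t : R) : IZR k <= t < IZR k + 1 -> frac t = t - IZR k.
Proof. intros H. unfold frac. rewrite (Int_part_unique k t H). reflexivity. Qed.

Lemma frac_range (t : R) : 0 <= frac t < 1.
Proof. unfold frac. destruct (Int_part_spec t). lra. Qed.

Lemma frac_piece (Phi : R -> R -> R) (z : R) (k : Z) (t : R) :
  (Phi z 0 = Phi z 1) -> IZR k <= t <= IZR k + 1 -> Phi z (frac t) = Phi z (t - IZR k).
Proof.
  intros H3 [h1 h2]. destruct (Rle_lt_or_eq_dec _ _ h2) as [h|h].
  - rewrite (frac_eq k t); auto; lra.
  - rewrite (frac_eq (k+1) t). 2:{ rewrite plus_IZR; change (IZR 1) with 1; lra. }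
    rewrite h, plus_IZR. change (IZR 1) with 1.
    replace (IZR k + 1 - (IZR k + 1)) with 0 by ring.
    replace (IZR k + 1 - IZR k) with 1 by ring. auto.
Qed.


Lemma inv_lt_x (x a z : R) : 0 < x -> 0 < a -> a < z -> / (x * z) < / (x * a).
Proof. intros. apply Rinv_lt_contravar; [apply Rmult_lt_0_compat; apply Rmult_lt_0_compat|]; nra. Qed.
Lemma inv_le_x (x a z : R) : 0 < x -> 0 < a -> a <= z -> / (x * z) <= / (x * a).
Proof. intros. apply Rinv_le_contravar; nra. Qed.

Lemma gpftc (x : R) (Phi phi : R -> R -> R) : 0 < x ->
  (forall k z, 0 < z -> is_derive (fun w => Phi w (/ (x * w) - k)) z (phi z (/ (x * z) - k))) ->
  (forall k z, 0 < z -> continuous (fun w => phi w (/ (x * w) - k)) z) ->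
  (forall z, Phi z 0 = Phi z 1) ->
  forall a b, 0 < a <= b ->
  is_RInt (fun z => phi z (frac (/ (x * z)))) a b
     (Phi b (frac (/ (x * b))) - Phi a (frac (/ (x * a)))).
Proof.
  intros Hx HD HCo H3.
  apply (glue x (fun a b => is_RInt (fun z => phi z (frac (/ (x * z)))) a b
     (Phi b (frac (/ (x * b))) - Phi a (frac (/ (x * a)))))); auto.
  - intros a b c Ha Hb H1 H2.
    pose proof (is_RInt_Chasles _ _ _ _ _ _ H1 H2) as H.
    match goal with |- is_RInt _ _ _ ?v => replace v with (plus (Phi b (frac (/ (x * b))) - Phi a (frac (/ (x * a)))) (Phi c (frac (/ (x * c))) - Phi b (frac (/ (x * b))))) end; auto.
    unfold plus; simpl. ring.
  - intros k a b Hab Hk1 Hk2.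
    assert (Hinv : forall z, a <= z <= b -> IZR k <= / (x * z) <= IZR k + 1).
    { intros z Hz. split.
      - apply Rle_trans with (/ (x * b)); auto. apply inv_le_x; lra.
      - apply Rle_trans with (/ (x * a)); auto. apply inv_le_x; lra. }
    rewrite (frac_piece Phi b k), (frac_piece Phi a k); auto; try (apply Hinv; lra).
    apply is_RInt_ext with (fun z => phi z (/ (x * z) - IZR k)).
    + rewrite Rmin_left, Rmax_right by lra. intros z Hz.
      rewrite (frac_eq k); auto. split.
      * apply Rle_trans with (/ (x * b)); auto. apply inv_le_x; lra.
      * apply Rlt_le_trans with (/ (x * a)); auto. apply inv_lt_x; lra.
    + apply (is_RInt_derive (fun w => Phi w (/ (x * w) - IZR k))).
      * rewrite Rmin_left, Rmax_right by lra. intros z Hz. apply HD. lra.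
      * rewrite Rmin_left, Rmax_right by lra. intros z Hz. apply HCo. lra.
Qed.

Lemma gint (x : R) (phi : R -> R -> R) : 0 < x ->
  (forall k z, 0 < z -> continuous (fun w => phi w (/ (x * w) - k)) z) ->
  forall a b, 0 < a <= b -> ex_RInt (fun z => phi z (frac (/ (x * z)))) a b.
Proof.
  intros Hx HCo.
  apply (glue x (fun a b => ex_RInt (fun z => phi z (frac (/ (x * z)))) a b)); auto.
  - intros a b c Ha Hb H1 H2. apply (ex_RInt_Chasles _ _ _ _ H1 H2).
  - intros k a b Hab Hk1 Hk2.
    apply ex_RInt_ext with (fun z => phi z (/ (x * z) - IZR k)).
    + rewrite Rmin_left, Rmax_right by lra. intros z Hz.
      rewrite (frac_eq k); auto. split.
      * apply Rle_trans with (/ (x * b)); auto. apply inv_le_x; lra.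
      * apply Rlt_le_trans with (/ (x * a)); auto. apply inv_lt_x; lra.
    + apply (@ex_RInt_continuous R_CompleteNormedModule).
      rewrite Rmin_left, Rmax_right by lra. intros z Hz. apply HCo. lra.
Qed.

Definition P (t : R) := t^2 - t + 1/6.
Definition Q (t : R) := t^3 - 3/2*t^2 + 1/2*t.
Definition A (x z : R) := x/2 * P (frac (/ (x * z))).

Ltac ctac := intros; apply (@ex_derive_continuous R_AbsRing R_NormedModule); unfold P, Q; auto_derive; repeat split; nra.

Lemma F1 x a b : 0 < x -> 0 < a <= b ->
  is_RInt (fun z => (1/2 - frac (/ (x * z))) + 2 * z * A x z) a b (b^2 * A x b - a^2 * A x a).
Proof.
  intros Hx Hab. unfold A.
  apply (gpftc x (fun z t => z^2 * (x/2 * P t)) (fun z t => (1/2 - t) + 2 * z * (x/2 * P t))); auto.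
  - intros k z Hz. unfold P. auto_derive. repeat split; nra. field. lra.
  - ctac.
  - intros; unfold P; ring.
Qed.

Lemma F2 x y a b : 0 < x -> 0 < y -> 0 < a <= b ->
  is_RInt (fun z => (1/2 - frac (/ (x * z))) * (1/2 - / (z * y)) + A x z * (z - / y)) a b
    (A x b * (b^2/2 - b / y) - A x a * (a^2/2 - a / y)).
Proof.
  intros Hx Hy Hab. unfold A.
  apply (gpftc x (fun z t => x/2 * P t * (z^2/2 - z / y)) (fun z t => (1/2 - t) * (1/2 - / (z * y)) + x/2 * P t * (z - / y))); auto.
  - intros k z Hz. unfold P. auto_derive. repeat split; nra. field. lra.
  - intros. apply (@ex_derive_continuous R_AbsRing R_NormedModule); unfold P, Q; auto_derive; repeat split; nra.
  - intros; unfold P; ring.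
Qed.

Lemma F3 x a b : 0 < x -> 0 < a <= b ->
  is_RInt (fun z => P (frac (/ (x * z))) - 2 * x / 3 * z * Q (frac (/ (x * z)))) a b
    (- (x/3) * b^2 * Q (frac (/ (x * b))) - (- (x/3) * a^2 * Q (frac (/ (x * a))))).
Proof.
  intros Hx Hab.
  apply (gpftc x (fun z t => - (x/3) * z^2 * Q t) (fun z t => P t - 2 * x / 3 * z * Q t)); auto.
  - intros k z Hz. unfold P, Q. auto_derive. repeat split; nra. field. lra.
  - ctac.
  - intros; unfold Q; field.
Qed.

Lemma I1 x a b : 0 < x -> 0 < a <= b -> ex_RInt (A x) a b.
Proof. intros Hx Hab. unfold A. apply (gint x (fun z t => x/2 * P t)); auto. ctac. Qed.
Lemma I2 x y a b : 0 < x -> 0 < y -> 0 < a <= b -> ex_RInt (fun z => A x z * (z - / y)) a b.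
Proof. intros Hx Hy Hab. unfold A. apply (gint x (fun z t => x/2 * P t * (z - / y))); auto. ctac. Qed.
Lemma I3 x a b : 0 < x -> 0 < a <= b -> ex_RInt (fun z => 2 * z * A x z) a b.
Proof. intros Hx Hab. unfold A. apply (gint x (fun z t => 2 * z * (x/2 * P t))); auto. ctac. Qed.
Lemma I4 x a b : 0 < x -> 0 < a <= b -> ex_RInt (fun z => z * Q (frac (/ (x * z)))) a b.
Proof. intros Hx Hab. apply (gint x (fun z t => z * Q t)); auto. ctac. Qed.
Lemma I5 x a b : 0 < x -> 0 < a <= b -> ex_RInt (fun z => P (frac (/ (x * z)))) a b.
Proof. intros Hx Hab. apply (gint x (fun z t => P t)); auto. ctac. Qed.
Definition M := / (12 * sqrt 3).

Lemma Q_bound t : 0 <= t <= 1 -> Rabs (Q t) <= M.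
Proof.
  intros Ht.
  assert (Hs : sqrt 3 * sqrt 3 = 3) by (apply sqrt_sqrt; lra).
  assert (Hs0 : 0 < sqrt 3) by (apply sqrt_lt_R0; lra).
  assert (HM : M * M = 1/432) by (unfold M; field_simplify; [rewrite ?Rsqr_def, ?pow2_sqrt; try lra|lra]; nra).
  assert (HM0 : 0 < M) by (unfold M; apply Rinv_0_lt_compat; lra).
  assert (Hq : Q t * Q t <= M * M).
  { rewrite HM. unfold Q. set (s := t - 1/2).
    replace t with (s + 1/2) by (unfold s; ring).
    assert (s*s <= 1/4) by (unfold s; nra).
    assert (1/432 - ((s + 1/2)^3 - 3/2*(s + 1/2)^2 + 1/2*(s + 1/2)) * ((s + 1/2)^3 - 3/2*(s + 1/2)^2 + 1/2*(s + 1/2))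
            = (s*s - 1/12)^2 * (1/3 - s*s)) by field.
    assert (0 <= (s*s - 1/12)^2 * (1/3 - s*s)) by (apply Rmult_le_pos; [apply pow2_ge_0|lra]).
    lra. }
  assert (H2 : Rabs (Q t) * Rabs (Q t) <= M * M) by (rewrite <- Rabs_mult, Rabs_right; nra).
  nra.
Qed.
Lemma is_RInt_lin (f g : R -> R) a b u v c :
  is_RInt f a b u -> is_RInt g a b v -> is_RInt (fun z => f z + c * g z) a b (u + c * v).
Proof.
  intros Hf Hg. pose proof (is_RInt_plus _ _ _ _ _ _ Hf (is_RInt_scal _ _ _ c _ Hg)) as H.
  exact H.
Qed.
Lemma is_RInt_lin_z c a b : is_RInt (fun z => c * z) a b (c * (b^2 - a^2)/2).
Proof.
  pose proof (is_RInt_derive (fun z => c * z^2 / 2) (fun z => c * z) a b) as H.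
  replace (c * (b^2 - a^2)/2) with (minus (c * b^2/2) (c * a^2/2)).
  apply H. intros; auto_derive; auto; field.
  intros. apply (@ex_derive_continuous R_AbsRing R_NormedModule). auto_derive. auto.
  unfold minus, plus, opp; simpl. field.
Qed.
Lemma RInt_abs_bound (f g : R -> R) a b : a <= b -> ex_RInt f a b -> ex_RInt g a b ->
  (forall z, a < z < b -> Rabs (f z) <= g z) -> Rabs (RInt f a b) <= RInt g a b.
Proof.
  intros Hab Hf Hg H. apply Rabs_le. split.
  - assert (Hm : is_RInt (fun z => - g z) a b (- RInt g a b)).
    { exact (is_RInt_opp _ _ _ _ (RInt_correct _ _ _ Hg)). }
    rewrite <- (is_RInt_unique _ _ _ _ Hm). apply RInt_le; auto. eexists; exact Hm.
    intros z Hz. specialize (H z Hz). apply Rabs_le_between in H. lra.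
  - apply RInt_le; auto. intros z Hz. specialize (H z Hz). apply Rabs_le_between in H. lra.
Qed.

Lemma P_bound t : 0 <= t <= 1 -> Rabs (P t) <= 1/6.
Proof. intros Ht. unfold P. apply Rabs_le. split; nra. Qed.

Lemma A_bound x z : 0 < x -> Rabs (A x z) <= x / 12.
Proof.
  intros Hx. unfold A. rewrite Rabs_mult, Rabs_right by lra.
  pose proof (P_bound (frac (/ (x * z)))). pose proof (frac_range (/ (x * z))).
  assert (Rabs (P (frac (/ (x * z)))) <= 1/6) by (apply H; lra). nra.
Qed.

Lemma M_pos : 0 < M.
Proof. unfold M. apply Rinv_0_lt_compat. assert (0 < sqrt 3) by (apply sqrt_lt_R0; lra). lra. Qed.

Lemma RP_bound x d : 0 < x -> 0 < d <= 1 ->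
  Rabs (RInt (fun z => P (frac (/ (x * z)))) d 1) <= 2 * x * M / 3.
Proof.
  intros Hx Hd.
  pose proof (F3 x d 1 Hx Hd) as H3.
  pose proof (I4 x d 1 Hx Hd) as H4.
  pose proof (is_RInt_lin _ _ _ _ _ _ (2 * x / 3) H3 (RInt_correct _ _ _ H4)) as H.
  assert (H' : is_RInt (fun z => P (frac (/ (x * z)))) d 1 (- (x / 3) * 1 ^ 2 * Q (frac (/ (x * 1))) -
     - (x / 3) * d ^ 2 * Q (frac (/ (x * d))) +
     2 * x / 3 * RInt (fun z : R => z * Q (frac (/ (x * z)))) d 1)).
  { eapply is_RInt_ext; [|exact H]. intros z _. simpl. ring. }
  rewrite (is_RInt_unique _ _ _ _ H').
  assert (Hw : Rabs (RInt (fun z => z * Q (frac (/ (x * z)))) d 1) <= M * (1^2 - d^2)/2).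
  { rewrite <- (is_RInt_unique _ _ _ _ (is_RInt_lin_z M d 1)).
    apply RInt_abs_bound; [lra|auto|eexists; apply is_RInt_lin_z|].
    intros z Hz. rewrite Rabs_mult, Rabs_right by lra.
    pose proof (Q_bound (frac (/ (x * z)))) as HQ. pose proof (frac_range (/ (x * z))).
    assert (Rabs (Q (frac (/ (x * z)))) <= M) by (apply HQ; lra).
    rewrite Rmult_comm. apply Rmult_le_compat_r; lra. }
  pose proof (Q_bound (frac (/ (x * 1)))) as Q1. pose proof (frac_range (/ (x * 1))).
  pose proof (Q_bound (frac (/ (x * d)))) as Qd. pose proof (frac_range (/ (x * d))).
  assert (H5 : Rabs (Q (frac (/ (x * 1)))) <= M) by (apply Q1; lra).
  assert (H6 : Rabs (Q (frac (/ (x * d)))) <= M) by (apply Qd; lra).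
  set (q1 := Q (frac (/ (x * 1)))) in *. set (qd := Q (frac (/ (x * d)))) in *.
  set (w := RInt (fun z => z * Q (frac (/ (x * z)))) d 1) in *.
  apply Rabs_le_between in H5. apply Rabs_le_between in H6. apply Rabs_le_between in Hw.
  pose proof M_pos.
  assert (d2 : 0 <= d^2 <= 1) by (split; nra).
  assert (a1 : - (x*M) <= x * q1 <= x*M) by (split; nra).
  assert (a2 : - (d^2*M) <= d^2 * qd <= d^2*M) by (split; nra).
  assert (a3 : - (x*(d^2*M)) <= x * (d^2 * qd) <= x*(d^2*M)) by (split; nra).
  assert (a4 : - (x*(M * (1 ^ 2 - d ^ 2) / 2)) <= x * w <= x*(M * (1 ^ 2 - d ^ 2) / 2)) by (split; nra).
  apply Rabs_le. split; nra.
Qed.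

Lemma is_RInt_zero a b : is_RInt (fun _ => 0) a b 0.
Proof.
  pose proof (is_RInt_const a b 0) as H0.
  unfold scal in H0; simpl in H0; unfold mult in H0; simpl in H0. rewrite Rmult_0_r in H0. exact H0.
Qed.

Fixpoint ssum (N : nat) (g : nat -> R) : R :=
  match N with O => 0 | S n => ssum n g + g (S n) end.

Lemma ssum_S n g : ssum (S n) g = ssum n g + g (S n).
Proof. reflexivity. Qed.

Lemma ssum_ext N g h : (forall m, (1 <= m <= N)%nat -> g m = h m) -> ssum N g = ssum N h.
Proof.
  induction N; intros H; simpl; auto.
  rewrite IHN by (intros; apply H; lia). rewrite (H (S N)) by lia. auto.
Qed.
Lemma ssum_plus N g h : ssum N (fun m => g m + h m) = ssum N g + ssum N h.
Proof. induction N; simpl; [ring|rewrite IHN; ring]. Qed.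
Lemma ssum_scal N c g : ssum N (fun m => c * g m) = c * ssum N g.
Proof. induction N; simpl; [ring|rewrite IHN; ring]. Qed.
Lemma ssum_const N c : ssum N (fun _ => c) = INR N * c.
Proof. induction N; simpl ssum; [simpl; ring|rewrite IHN, S_INR; ring]. Qed.
Lemma ssum_sum_n N g : ssum N g = sum_n g N - g O.
Proof.
  induction N; simpl ssum.
  - rewrite sum_O. ring.
  - rewrite sum_Sn, IHN. unfold plus; simpl. ring.
Qed.
Lemma is_RInt_ssum N (h : nat -> R -> R) (v : nat -> R) a b :
  (forall m, (1 <= m <= N)%nat -> is_RInt (h m) a b (v m)) ->
  is_RInt (fun z => ssum N (fun m => h m z)) a b (ssum N v).
Proof.
  induction N; intros H; simpl.
  - apply is_RInt_zero.
  - pose proof (is_RInt_lin _ _ _ _ _ _ 1 (IHN (fun m Hm => H m ltac:(lia))) (H (S N) ltac:(lia))) as H1.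
    replace (ssum N v + v (S N)) with (ssum N v + 1 * v (S N)) by ring.
    eapply is_RInt_ext; [|exact H1]. intros; simpl; ring.
Qed.

Lemma ones N t : INR N <= t -> ssum N (fun m => if Rle_dec (INR m) t then 1 else 0) = INR N.
Proof.
  induction N; intros H; [simpl; auto|]. rewrite ssum_S.
  rewrite IHN. 2:{ rewrite S_INR in H; lra. }
  cbv beta. destruct (Rle_dec _ t) as [h|h]; rewrite S_INR in *; [ring|lra].
Qed.

Lemma floor_sum N t : 0 <= t < INR N + 1 ->
  IZR (Int_part t) = ssum N (fun m => if Rle_dec (INR m) t then 1 else 0).
Proof.
  induction N; intros H; [simpl ssum|rewrite ssum_S; cbv beta].
  - rewrite (Int_part_unique 0 t); simpl in *; [auto|lra].
  - destruct (Rlt_dec t (INR N + 1)) as [h|h].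
    + rewrite <- IHN by lra. destruct (Rle_dec (INR (S N)) t) as [h'|h']; [rewrite S_INR in h'; lra|ring].
    + rewrite ones by (rewrite S_INR in *; lra).
      destruct (Rle_dec (INR (S N)) t) as [h'|h']; [|rewrite S_INR in *; lra].
      rewrite (Int_part_unique (Z.of_nat (S N)) t). 
      * rewrite <- INR_IZR_INZ, S_INR. ring.
      * rewrite <- INR_IZR_INZ. rewrite S_INR in *. lra.
Qed.

Lemma cut_lemma (g h : R -> R) a b c l : a <= c <= b -> is_RInt g a c l ->
  (forall z, a < z < c -> h z = g z) -> (forall z, c < z < b -> h z = 0) -> is_RInt h a b l.
Proof.
  intros Hc Hg H1 H2.
  assert (Ha : is_RInt h a c l).
  { apply is_RInt_ext with g; auto. rewrite Rmin_left, Rmax_right by lra. intros; symmetry; auto. }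
  assert (Hb : is_RInt h c b 0).
  { apply is_RInt_ext with (fun _ => 0).
    rewrite Rmin_left, Rmax_right by lra. intros; symmetry; auto.
    apply is_RInt_zero. }
  pose proof (is_RInt_Chasles _ _ _ _ _ _ Ha Hb) as H. unfold plus in H; simpl in H.
  rewrite Rplus_0_r in H. exact H.
Qed.

Lemma le_inv (a u : R) : 0 < u -> a * u <= 1 -> a <= / u.
Proof. intros Hu H. replace a with (a * u * / u) by (field; lra). 
  apply Rmult_le_compat_r with (r := / u) in H; [|left; apply Rinv_0_lt_compat; lra].
  rewrite Rmult_1_l in H. exact H. Qed.
Lemma lt_inv (a u : R) : 0 < u -> 1 < a * u -> / u < a.
Proof. intros Hu H. replace a with (a * u * / u) by (field; lra). 
  apply Rmult_lt_compat_r with (r := / u) in H; [|apply Rinv_0_lt_compat; lra].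
  rewrite Rmult_1_l in H. exact H. Qed.

Definition ind (y : R) (m : nat) (z : R) := if Rle_dec (INR m) (/ (z * y)) then 1 else 0.
Definition bm (y : R) (m : nat) := Rmin 1 (/ (INR m * y)).
Definition Gf (x y z : R) := A x z * (- / y + 2 * z * (frac (/ (z * y)) - 1/2)).

Lemma mul_lt_1 z u : 0 < u -> z < / u -> z * u < 1.
Proof. intros Hu H. apply Rmult_lt_compat_r with (r := u) in H; auto. rewrite Rinv_l in H; lra. Qed.
Lemma mul_gt_1 z u : 0 < u -> / u < z -> 1 < z * u.
Proof. intros Hu H. apply Rmult_lt_compat_r with (r := u) in H; auto. rewrite Rinv_l in H; lra. Qed.

Lemma bm_facts y N m : 0 < y -> 1 <= INR N * y -> (1 <= m <= N)%nat ->
  / (INR N * y) <= bm y m <= 1 /\ bm y m <= / (INR m * y)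
  /\ (forall z, bm y m < z < 1 -> / (INR m * y) < z).
Proof.
  intros Hy HN Hm.
  assert (Hm1 : 1 <= INR m) by (replace 1 with (INR 1) by reflexivity; apply le_INR; lia).
  assert (HmN : INR m <= INR N) by (apply le_INR; lia).
  assert (Hd : / (INR N * y) <= / (INR m * y)) by (apply Rinv_le_contravar; nra).
  assert (Hd1 : / (INR N * y) <= 1).
  { rewrite <- Rinv_1. apply Rinv_le_contravar; lra. }
  unfold bm. destruct (Rle_dec 1 (/ (INR m * y))) as [h|h].
  - rewrite Rmin_left by lra. split; [lra|split; [lra|]]. intros z Hz. lra.
  - rewrite Rmin_right by lra. split; [lra|split; [lra|]]. intros z Hz. lra.
Qed.

Lemma piece_m x y N m : 0 < x -> 0 < y -> 1 <= INR N * y -> (1 <= m <= N)%nat ->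
  is_RInt (fun z => ((1/2 - frac (/ (x * z))) + 2 * z * A x z) * ind y m z) (/ (INR N * y)) 1
    ((bm y m)^2 * A x (bm y m) - (/ (INR N * y))^2 * A x (/ (INR N * y))).
Proof.
  intros Hx Hy HN Hm.
  destruct (bm_facts y N m Hy HN Hm) as [[B1 B2] [B3 B4]].
  assert (Hm1 : 1 <= INR m) by (replace 1 with (INR 1) by reflexivity; apply le_INR; lia).
  assert (Hd0 : 0 < / (INR N * y)) by (apply Rinv_0_lt_compat; lra).
  apply cut_lemma with (g := fun z => (1/2 - frac (/ (x * z))) + 2 * z * A x z) (c := bm y m).
  - lra.
  - apply F1; [exact Hx| split; [exact Hd0|exact B1]].
  - intros z Hz. cbv beta. unfold ind. destruct (Rle_dec _ _) as [h|h]; [ring|exfalso; apply h].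
    apply le_inv; [nra|]. assert (z * (INR m * y) < 1) by (apply mul_lt_1; nra). nra.
  - intros z Hz. cbv beta. unfold ind. destruct (Rle_dec _ _) as [h|h]; [exfalso|ring].
    assert (1 < z * (INR m * y)) by (apply mul_gt_1; [nra|apply B4; auto]).
    assert (/ (z * y) < INR m) by (apply lt_inv; nra). lra.
Qed.

Lemma Kxz x z : 0 < x -> 0 < z -> K x z = 1/2 - frac (/ (x * z)).
Proof. intros. unfold K. destruct (Req_EM_T (x * z) 0); [nra|ring]. Qed.

Lemma ssum_ind_floor y N z : 0 < y -> 1 <= INR N * y -> / (INR N * y) <= z ->
  ssum N (fun m => ind y m z) = IZR (Int_part (/ (z * y))).
Proof.
  intros Hy HN Hz.
  assert (Hd0 : 0 < / (INR N * y)) by (apply Rinv_0_lt_compat; lra).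
  rewrite (floor_sum N). reflexivity. split.
  - left; apply Rinv_0_lt_compat; nra.
  - assert (/ (z * y) <= / (/ (INR N * y) * y)) by (apply Rinv_le_contravar; nra).
    replace (/ (/ (INR N * y) * y)) with (INR N) in H by (field; nra). lra.
Qed.

Lemma decomp x y N z : 0 < x -> 0 < y -> 1 <= INR N * y -> / (INR N * y) <= z ->
  K x z * K z y = ((1/2 - frac (/ (x * z))) * (1/2 - / (z * y)) + A x z * (z - / y))
     + 1 * ssum N (fun m => ((1/2 - frac (/ (x * z))) + 2 * z * A x z) * ind y m z) + 1 * Gf x y z.
Proof.
  intros Hx Hy HN Hz.
  assert (Hd0 : 0 < / (INR N * y)) by (apply Rinv_0_lt_compat; lra).
  rewrite Kxz by lra. rewrite (Rmult_comm z y), Kxz by lra. rewrite (Rmult_comm y z).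
  replace (ssum N (fun m => ((1/2 - frac (/ (x * z))) + 2 * z * A x z) * ind y m z))
    with (((1/2 - frac (/ (x * z))) + 2 * z * A x z) * ssum N (fun m => ind y m z))
    by (rewrite <- ssum_scal; reflexivity).
  rewrite ssum_ind_floor by auto. assert (Hz0 : 0 < z) by (apply Rlt_le_trans with (/ (INR N * y)); auto).
  unfold Gf, frac. field. repeat split; apply Rgt_not_eq; assumption.
Qed.

Lemma Gf_decomp x y N z : 0 < x -> 0 < y -> 1 <= INR N * y -> / (INR N * y) <= z ->
  Gf x y z = (-1) * (A x z * (z - / y)) + (-1) * ssum N (fun m => 2 * z * A x z * ind y m z).
Proof.
  intros Hx Hy HN Hz.
  assert (Hd0 : 0 < / (INR N * y)) by (apply Rinv_0_lt_compat; lra).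
  replace (ssum N (fun m => 2 * z * A x z * ind y m z))
    with ((2 * z * A x z) * ssum N (fun m => ind y m z))
    by (rewrite <- ssum_scal; reflexivity).
  assert (Hz0 : 0 < z) by (apply Rlt_le_trans with (/ (INR N * y)); auto).
  rewrite ssum_ind_floor by auto. unfold Gf, frac. field. repeat split; apply Rgt_not_eq; assumption.
Qed.

Lemma Gf_int x y N : 0 < x -> 0 < y -> 1 <= INR N * y -> ex_RInt (Gf x y) (/ (INR N * y)) 1.
Proof.
  intros Hx Hy HN.
  assert (Hd0 : 0 < / (INR N * y)) by (apply Rinv_0_lt_compat; lra).
  assert (Hd1 : / (INR N * y) <= 1) by (rewrite <- Rinv_1; apply Rinv_le_contravar; lra).
  pose proof (I2 x y _ _ Hx Hy (conj Hd0 Hd1)) as H2.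
  assert (HS : ex_RInt (fun z => ssum N (fun m => 2 * z * A x z * ind y m z)) (/ (INR N * y)) 1).
  { eexists. apply (is_RInt_ssum N (fun m z => 2 * z * A x z * ind y m z)
      (fun m => RInt (fun z => 2 * z * A x z) (/ (INR N * y)) (bm y m))).
    intros m Hm. destruct (bm_facts y N m Hy HN Hm) as [[B1 B2] [B3 B4]].
    assert (Hm1 : 1 <= INR m) by (replace 1 with (INR 1) by reflexivity; apply le_INR; lia).
    apply cut_lemma with (g := fun z => 2 * z * A x z) (c := bm y m).
    - lra.
    - exact (@RInt_correct R_CompleteNormedModule _ _ _ (I3 x _ _ Hx (conj Hd0 B1))).
    - intros z Hz. cbv beta. unfold ind. destruct (Rle_dec _ _) as [h|h]; [ring|exfalso; apply h].
      apply le_inv; [nra|]. assert (z * (INR m * y) < 1) by (apply mul_lt_1; nra). nra.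
    - intros z Hz. cbv beta. unfold ind. destruct (Rle_dec _ _) as [h|h]; [exfalso|ring].
      assert (1 < z * (INR m * y)) by (apply mul_gt_1; [nra|apply B4; auto]).
      assert (/ (z * y) < INR m) by (apply lt_inv; nra). lra. }
  destruct H2 as [l2 H2]. destruct HS as [lS HS].
  pose proof (is_RInt_lin _ _ _ _ _ _ (-1) (is_RInt_lin _ _ _ _ _ _ (-1) (is_RInt_zero _ _) H2) HS) as H.
  eexists. eapply is_RInt_ext; [|exact H].
  rewrite Rmin_left, Rmax_right by lra. intros z Hz. simpl.
  rewrite (Gf_decomp x y N z) by (auto; lra). ring.
Qed.

Lemma master_is x y N : 0 < x -> 0 < y -> 1 <= INR N * y ->
  is_RInt (fun z => K x z * K z y) (/ (INR N * y)) 1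
   ((A x 1 * (1^2/2 - 1 / y) - A x (/ (INR N * y)) * ((/ (INR N * y))^2/2 - (/ (INR N * y)) / y))
    + 1 * ssum N (fun m => (bm y m)^2 * A x (bm y m) - (/ (INR N * y))^2 * A x (/ (INR N * y)))
    + 1 * RInt (Gf x y) (/ (INR N * y)) 1).
Proof.
  intros Hx Hy HN.
  assert (Hd0 : 0 < / (INR N * y)) by (apply Rinv_0_lt_compat; lra).
  assert (Hd1 : / (INR N * y) <= 1) by (rewrite <- Rinv_1; apply Rinv_le_contravar; lra).
  pose proof (F2 x y _ _ Hx Hy (conj Hd0 Hd1)) as H2.
  pose proof (is_RInt_ssum N _ _ _ _ (fun m Hm => piece_m x y N m Hx Hy HN Hm)) as HS.
  pose proof (@RInt_correct R_CompleteNormedModule _ _ _ (Gf_int x y N Hx Hy HN)) as HG.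
  pose proof (is_RInt_lin _ _ _ _ _ _ 1 (is_RInt_lin _ _ _ _ _ _ 1 H2 HS) HG) as H.
  eapply is_RInt_ext; [|exact H].
  rewrite Rmin_left, Rmax_right by lra. intros z Hz. cbv beta.
  rewrite (decomp x y N z) by (auto; lra). reflexivity.
Qed.

Definition aser (x y : R) (m : nat) :=
  if Rlt_dec (/ y) (INR m) then B2t (INR m * y / x) / (INR m)^2 else 0.

Lemma bm_term x y N m : 0 < x -> 0 < y -> 1 <= INR N * y -> (1 <= m <= N)%nat ->
  (bm y m)^2 * A x (bm y m) = (if Rle_dec (INR m) (/ y) then 1 else 0) * A x 1 + x / (2 * y^2) * aser x y m.
Proof.
  intros Hx Hy HN Hm.
  assert (Hm1 : 1 <= INR m) by (replace 1 with (INR 1) by reflexivity; apply le_INR; lia).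
  unfold bm, aser. destruct (Rle_dec (INR m) (/ y)) as [h|h].
  - destruct (Rlt_dec (/ y) (INR m)) as [h'|h']; [lra|].
    rewrite Rmin_left. ring.
    apply le_inv; [nra|]. 
    assert (INR m * y <= / y * y) by (apply Rmult_le_compat_r; lra).
    rewrite Rinv_l in H by lra. nra.
  - destruct (Rlt_dec (/ y) (INR m)) as [h'|h']; [|lra].
    assert (1 < INR m * y) by (apply mul_gt_1 in h'; [lra|lra]).
    rewrite Rmin_right. 2:{ left. apply lt_inv; lra. }
    unfold A, B2t. replace (/ (x * / (INR m * y))) with (INR m * y / x) by (field; split; lra).
    unfold P. field. lra.
Qed.

Lemma RA_bound x d : 0 < x -> 0 < d <= 1 -> ex_RInt (A x) d 1 /\
  Rabs (RInt (A x) d 1) <= x * x * M / 3.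
Proof.
  intros Hx Hd. split; [apply I1; auto|].
  pose proof (I5 x d 1 Hx Hd) as H5.
  pose proof (is_RInt_lin _ _ _ _ _ _ (x/2) (is_RInt_zero d 1) (@RInt_correct R_CompleteNormedModule _ _ _ H5)) as H.
  assert (H' : is_RInt (A x) d 1 (0 + x / 2 * RInt (fun z => P (frac (/ (x * z)))) d 1)).
  { eapply is_RInt_ext; [|exact H]. intros z _. unfold A. simpl. ring. }
  rewrite (is_RInt_unique _ _ _ _ H').
  pose proof (RP_bound x d Hx Hd). rewrite Rplus_0_l, Rabs_mult, (Rabs_right (x/2)) by lra.
  replace (x * x * M / 3) with (x / 2 * (2 * x * M / 3)) by field.
  apply Rmult_le_compat_l; lra.
Qed.

Lemma master_bound x y N : 0 < x <= 1 -> 0 < y <= 1 -> 1 <= INR N * y ->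
  ex_RInt (fun z => K x z * K z y) (/ (INR N * y)) 1 /\
  Rabs (RInt (fun z => K x z * K z y) (/ (INR N * y)) 1)
   <= x / 24 + x * (/ (INR N * y))^2 / 24 + x / (2 * y^2) * Rabs (sum_n (aser x y) N)
      + x * x * M / (3 * y) + x / 24.
Proof.
  intros Hx Hy HN.
  set (d := / (INR N * y)).
  assert (Hd0 : 0 < d) by (apply Rinv_0_lt_compat; lra).
  assert (Hd1 : d <= 1) by (unfold d; rewrite <- Rinv_1; apply Rinv_le_contravar; lra).
  pose proof (master_is x y N ltac:(lra) ltac:(lra) HN) as HI. fold d in HI.
  split; [eexists; exact HI|].
  rewrite (is_RInt_unique _ _ _ _ HI).
  rewrite (ssum_ext N _ (fun m => (if Rle_dec (INR m) (/ y) then 1 else 0) * A x 1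
                 + (x / (2 * y^2) * aser x y m + (-1) * (d^2 * A x d)))).
  2:{ intros m Hm. rewrite (bm_term x y N m) by (auto; lra). ring. }
  rewrite ssum_plus, ssum_plus, ssum_scal, ssum_scal, ssum_const.
  rewrite (ssum_ext N (fun m => (if Rle_dec (INR m) (/ y) then 1 else 0) * A x 1)
            (fun m => A x 1 * (if Rle_dec (INR m) (/ y) then 1 else 0))) by (intros; ring).
  rewrite ssum_scal, <- floor_sum.
  2:{ split. left; apply Rinv_0_lt_compat; lra.
      assert (/ y <= INR N).
      { apply Rmult_le_reg_r with y; [lra|]. rewrite Rinv_l; lra. } lra. }
  rewrite ssum_sum_n.
  assert (Ha0 : aser x y 0 = 0).
  { unfold aser. destruct (Rlt_dec _ _) as [h|h]; auto. simpl in h.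
    assert (0 < / y) by (apply Rinv_0_lt_compat; lra). lra. }
  rewrite Ha0, Rminus_0_r.
  destruct (RA_bound x d ltac:(lra) ltac:(lra)) as [EA BA].
  pose proof (@RInt_correct R_CompleteNormedModule _ _ _ (Gf_int x y N ltac:(lra) ltac:(lra) HN)) as HG.
  fold d in HG.
  pose proof (is_RInt_lin _ _ _ _ _ _ (/ y) HG (@RInt_correct R_CompleteNormedModule _ _ _ EA)) as HH.
  set (H := fun z => 2 * z * A x z * (frac (/ (z * y)) - 1/2)).
  assert (HH' : is_RInt H d 1 (RInt (Gf x y) d 1 + / y * RInt (A x) d 1)).
  { eapply is_RInt_ext; [|exact HH]. intros z _. unfold H, Gf. simpl. field. lra. }
  assert (BH : Rabs (RInt H d 1) <= x / 12 * (1^2 - d^2) / 2).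
  { rewrite <- (is_RInt_unique _ _ _ _ (is_RInt_lin_z (x/12) d 1)).
    apply RInt_abs_bound; [lra|eexists; exact HH'|eexists; apply is_RInt_lin_z|].
    intros z Hz. unfold H. pose proof (A_bound x z ltac:(lra)). pose proof (frac_range (/ (z * y))).
    rewrite !Rabs_mult, (Rabs_right 2), (Rabs_right z) by lra.
    assert (Rabs (frac (/ (z * y)) - 1/2) <= 1/2) by (apply Rabs_le; lra).
    assert (0 <= Rabs (A x z)) by apply Rabs_pos.
    assert (0 <= Rabs (frac (/ (z * y)) - 1 / 2)) by apply Rabs_pos.
    assert (Rabs (A x z) * Rabs (frac (/ (z * y)) - 1 / 2) <= x / 12 * (1/2)) by
      (apply Rmult_le_compat; lra).
    nra. }
  rewrite (is_RInt_unique _ _ _ _ HH') in BH.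
  set (RG := RInt (Gf x y) d 1) in *. set (RA := RInt (A x) d 1) in *.
  set (S := sum_n (aser x y) N).
  pose proof (A_bound x 1 ltac:(lra)) as A1. pose proof (A_bound x d ltac:(lra)) as Ad.
  set (a1 := A x 1) in *. set (ad := A x d) in *.
  assert (HNd : INR N * d = / y) by (unfold d; field; repeat split; nra).
  assert (Hfr : / y - IZR (Int_part (/ y)) = frac (/ y)) by reflexivity.
  pose proof (frac_range (/ y)) as Fr.
  match goal with |- Rabs ?e <= _ => replace e with
   (a1 * (1/2 - frac (/ y)) - ad * d^2 / 2 + x / (2 * y ^ 2) * S + (RG + / y * RA) - / y * RA) end.
  2:{ rewrite <- Hfr. replace (d / y) with (d * (INR N * d)) by (rewrite HNd; field; lra). field. lra. }
  assert (E1 : Rabs (a1 * (1/2 - frac (/ y))) <= x / 24).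
  { rewrite Rabs_mult. assert (Rabs (1/2 - frac (/ y)) <= 1/2) by (apply Rabs_le; lra).
    assert (0 <= Rabs a1) by apply Rabs_pos. assert (0 <= Rabs (1/2 - frac (/ y))) by apply Rabs_pos.
    replace (x / 24) with (x / 12 * (1/2)) by field. apply Rmult_le_compat; lra. }
  assert (E2 : Rabs (ad * d^2 / 2) <= x * d ^ 2 / 24).
  { replace (ad * d^2 / 2) with (ad * (d^2/2)) by field. rewrite Rabs_mult, (Rabs_right (d^2/2)) by nra.
    replace (x * d ^ 2 / 24) with (x / 12 * (d^2/2)) by field. apply Rmult_le_compat_r; nra. }
  assert (E3 : Rabs (x / (2 * y ^ 2) * S) = x / (2 * y ^ 2) * Rabs S).
  { rewrite Rabs_mult, Rabs_right; auto. apply Rle_ge. left. apply Rdiv_lt_0_compat; nra. }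
  assert (E4 : Rabs (/ y * RA) <= x * x * M / (3 * y)).
  { rewrite Rabs_mult, Rabs_right by (left; apply Rinv_0_lt_compat; lra).
    replace (x * x * M / (3 * y)) with (/ y * (x * x * M / 3)) by (field; lra).
    apply Rmult_le_compat_l; [left; apply Rinv_0_lt_compat; lra|auto]. }
  assert (E5 : Rabs (RG + / y * RA) <= x / 24).
  { eapply Rle_trans; [exact BH|]. nra. }
  pose proof (Rabs_triang (a1 * (1/2 - frac (/ y)) - ad * d^2 / 2 + x / (2 * y ^ 2) * S + (RG + / y * RA)) (- (/ y * RA))).
  pose proof (Rabs_triang (a1 * (1/2 - frac (/ y)) - ad * d^2 / 2 + x / (2 * y ^ 2) * S) (RG + / y * RA)).
  pose proof (Rabs_triang (a1 * (1/2 - frac (/ y)) - ad * d^2 / 2) (x / (2 * y ^ 2) * S)).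
  pose proof (Rabs_triang (a1 * (1/2 - frac (/ y))) (- (ad * d^2 / 2))).
  rewrite Rabs_Ropp in *.
  unfold Rminus in *. lra.
Qed.
Lemma SF_ext_int (f g : R -> R) a b (H : IsStepFun f a b) : a <= b ->
  (forall t, a < t < b -> f t = g t) ->
  {H' : IsStepFun g a b | RiemannInt_SF (mkStepFun H') = RiemannInt_SF (mkStepFun H)}.
Proof.
  intros Hab E. destruct H as [l [lf Hc]].
  assert (Hc' : adapted_couple g a b l lf).
  { destruct Hc as [Ho [H0 [Hl [Hlen Hcc]]]].
    repeat split; auto. intros i Hi t Ht. rewrite <- E.
    - apply (Hcc i Hi t Ht).
    - rewrite Rmin_left in H0 by lra. rewrite Rmax_right in Hl by lra.
      destruct (RList.RList_P6 l) as [P6 _]. specialize (P6 Ho).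
      assert (RList.pos_Rl l 0 <= RList.pos_Rl l i) by (apply P6; lia).
      assert (RList.pos_Rl l (S i) <= RList.pos_Rl l (Init.Nat.pred (length l))) by (apply P6; lia).
      unfold open_interval in Ht. lra. }
  exists (existT _ l (existT _ lf Hc')). unfold RiemannInt_SF. simpl. reflexivity.
Qed.

Lemma integ_glue (f : R -> R) a b B : a < b -> (forall t, a <= t <= b -> Rabs (f t) <= B) ->
  (forall d, a < d <= b -> ex_RInt f d b) -> ex_RInt f a b.
Proof.
  intros Hab HB Hd. apply ex_RInt_Reals_1. intros eps.
  set (B' := Rabs B + 1).
  assert (HB' : 0 < B') by (unfold B'; pose proof (Rabs_pos B); lra).
  set (h := Rmin (b - a) (eps / (4 * B'))).
  assert (Hh : 0 < h /\ h <= b - a /\ h <= eps / (4 * B')).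
  { unfold h. pose proof (cond_pos eps). split; [apply Rmin_pos; [lra|apply Rdiv_lt_0_compat; lra]|].
    split; [apply Rmin_l|apply Rmin_r]. }
  set (d := a + h).
  assert (Hd' : a < d <= b) by (unfold d; lra).
  pose proof (ex_RInt_Reals_0 _ _ _ (Hd d Hd')) as R2.
  assert (He2 : 0 < eps / 2) by (pose proof (cond_pos eps); lra).
  destruct (R2 (mkposreal _ He2)) as [phi2 [psi2 [Hp2 Hi2]]].
  set (phi := fun t => if Rle_dec t d then 0 else phi2 t).
  set (psi := fun t => if Rle_dec t d then B' else psi2 t).
  destruct (SF_ext_int (fct_cte 0) phi a d (StepFun_P4 a d 0)) as [Pa _]; [lra| |].
  { intros t Ht. unfold phi, fct_cte. destruct (Rle_dec t d); [auto|lra]. }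
  destruct (SF_ext_int phi2 phi d b (pre phi2)) as [Pb _]; [lra| |].
  { intros t Ht. unfold phi. destruct (Rle_dec t d); [lra|auto]. }
  destruct (SF_ext_int (fct_cte B') psi a d (StepFun_P4 a d B')) as [Qa EQa]; [lra| |].
  { intros t Ht. unfold psi, fct_cte. destruct (Rle_dec t d); [auto|lra]. }
  destruct (SF_ext_int psi2 psi d b (pre psi2)) as [Qb EQb]; [lra| |].
  { intros t Ht. unfold psi. destruct (Rle_dec t d); [lra|auto]. }
  exists (mkStepFun (StepFun_P46 Pa Pb)). exists (mkStepFun (StepFun_P46 Qa Qb)).
  split.
  - intros t Ht. simpl. unfold phi, psi. rewrite Rmin_left, Rmax_right in Ht by lra.
    destruct (Rle_dec t d).
    + rewrite Rminus_0_r. pose proof (HB t ltac:(lra)). pose proof (Rle_abs B). unfold B'. lra.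
    + apply Hp2. rewrite Rmin_left, Rmax_right by lra. lra.
  - simpl. rewrite <- (StepFun_P43 Qa Qb). rewrite EQa. 
    replace (RiemannInt_SF {| fe := psi; pre := Qb |}) with (RiemannInt_SF psi2).
    try (rewrite EQb; destruct psi2; reflexivity).
    rewrite StepFun_P18.
    assert (B' * (d - a) <= eps / 4).
    { unfold d. replace (a + h - a) with h by ring. 
      destruct Hh as [_ [_ Hh']].
      apply Rle_trans with (B' * (eps / (4 * B'))). apply Rmult_le_compat_l; lra.
      right; field; lra. }
    assert (0 <= B' * (d - a)) by (apply Rmult_le_pos; unfold d; lra).
    simpl in Hi2. pose proof (Rabs_triang (B' * (d - a)) (RiemannInt_SF psi2)).
    rewrite (Rabs_right (B' * (d - a))) in H1 by lra. pose proof (cond_pos eps). lra.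
Qed.
Lemma nat_large (r : R) : exists n : nat, r < INR n.
Proof.
  destruct (archimed (Rabs r)) as [H1 _].
  assert (Hp : (0 <= up (Rabs r))%Z).
  { apply le_IZR. pose proof (Rabs_pos r). simpl. lra. }
  exists (Z.to_nat (up (Rabs r))). rewrite INR_IZR_INZ, Z2Nat.id by auto.
  pose proof (Rle_abs r). lra.
Qed.

Lemma frac_le a b c d : 0 < b -> 0 < d -> a * d <= c * b -> a / b <= c / d.
Proof.
  intros Hb Hd H. replace (a / b) with ((a * d) * / (b * d)) by (field; lra).
  replace (c / d) with ((c * b) * / (b * d)) by (field; lra).
  apply Rmult_le_compat_r; [left; apply Rinv_0_lt_compat; nra|auto].
Qed.

Lemma sum_SnR (a : nat -> R) n : sum_n a (S n) = sum_n a n + a (S n).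
Proof. rewrite sum_Sn. reflexivity. Qed.

Definition cc (t : R) (m : nat) := if Rlt_dec t (INR m) then / (INR m)^2 else 0.

Lemma cc_zero t N : INR N <= t -> sum_n (cc t) N = 0.
Proof.
  induction N; intros H.
  - rewrite sum_O. unfold cc. destruct (Rlt_dec _ _); [lra|auto].
  - rewrite sum_SnR, IHN. 2:{ rewrite S_INR in H; pose proof (pos_INR N); lra. }
    unfold cc at 1. destruct (Rlt_dec _ _) as [h|h]; [lra|]. simpl. ring.
Qed.

Lemma cc_bound t N : 1 <= t ->
  sum_n (cc t) N <= / t + / t^2 - (if Rlt_dec t (INR N) then 2 / (2 * INR N + 1) else 0).
Proof.
  intros Ht.
  assert (Hi : 0 < / t) by (apply Rinv_0_lt_compat; lra).
  assert (Hi2 : 0 < / t^2) by (apply Rinv_0_lt_compat; nra).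
  induction N.
  - rewrite cc_zero by (simpl; lra). destruct (Rlt_dec _ _) as [h|h]; simpl in h; lra.
  - rewrite sum_SnR. unfold cc at 2.
    pose proof (pos_INR N) as HN. rewrite S_INR.
    destruct (Rlt_dec t (INR N + 1)) as [h|h].
    + destruct (Rlt_dec t (INR N)) as [h'|h'] in IHN.
      *
        assert (/ (INR N + 1)^2 <= 2 / (2 * INR N + 1) - 2 / (2 * (INR N + 1) + 1)).
        { set (n := INR N) in *.
          replace (2 / (2 * n + 1) - 2 / (2 * (n + 1) + 1)) with (4 / ((2 * n + 1) * (2 * n + 3))) by (field; lra).
          replace (/ (n + 1)^2) with (1 / (n + 1)^2) by (field; lra).
          apply frac_le; nra. }
        lra.
      * rewrite cc_zero by lra.
        set (u := INR N + 1) in *.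
        assert (Hu : 1 <= u) by (unfold u; lra).
        assert (Htu : / u <= / t) by (apply Rinv_le_contravar; lra).
        assert (Htu2 : / u^2 <= / t^2) by (apply Rinv_le_contravar; nra).
        assert (2 / (2 * u + 1) <= / u).
        { replace (/ u) with (1 / u) by (field; lra). apply frac_le; nra. }
        lra.
    + destruct (Rlt_dec t (INR N)) as [h'|h'] in IHN; [lra|]. lra.
Qed.

Lemma sum_abs_le (a : nat -> R) N : Rabs (sum_n a N) <= sum_n (fun m => Rabs (a m)) N.
Proof.
  induction N.
  - rewrite !sum_O. lra.
  - rewrite !sum_SnR. eapply Rle_trans; [apply Rabs_triang|]. lra.
Qed.

Lemma sum_le (a b : nat -> R) N : (forall m, a m <= b m) -> sum_n a N <= sum_n b N.
Proof.
  intros H. induction N.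
  - rewrite !sum_O. auto.
  - rewrite !sum_SnR. specialize (H (S N)). lra.
Qed.

Lemma sum_scalR (a : nat -> R) c N : sum_n (fun m => c * a m) N = c * sum_n a N.
Proof.
  induction N.
  - rewrite !sum_O. auto.
  - rewrite !sum_SnR, IHN. simpl. ring.
Qed.

Lemma aser_abs x y m : 0 < y <= 1 -> Rabs (aser x y m) <= / 6 * cc (/ y) m.
Proof.
  intros Hy. unfold aser, cc. destruct (Rlt_dec _ _) as [h|h].
  - assert (0 < / y) by (apply Rinv_0_lt_compat; lra).
    assert (Hm : 0 < INR m ^ 2) by nra.
    unfold Rdiv. rewrite Rabs_mult, (Rabs_right (/ (INR m ^ 2))) by (left; apply Rinv_0_lt_compat; lra).
    unfold B2t. pose proof (frac_range (INR m * y * / x)).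
    pose proof (P_bound (frac (INR m * y * / x)) ltac:(lra)) as HP. unfold P in HP.
    apply Rmult_le_compat_r; [left; apply Rinv_0_lt_compat; lra|]. lra.
  - rewrite Rabs_R0. lra.
Qed.

Lemma cc_nonneg t m : 0 < t -> 0 <= cc t m.
Proof. intros Ht. unfold cc. destruct (Rlt_dec _ _); [|lra]. left. apply Rinv_0_lt_compat.
  apply pow_lt. lra. Qed.

Lemma Sabs_bound x y N : 0 < y <= 1 -> Rabs (sum_n (aser x y) N) <= / 6 * (y + y^2).
Proof.
  intros Hy. eapply Rle_trans; [apply sum_abs_le|].
  eapply Rle_trans; [apply (sum_le _ (fun m => / 6 * cc (/ y) m)); intros m; apply aser_abs; auto|].
  rewrite sum_scalR. apply Rmult_le_compat_l; [lra|].
  assert (Hy1 : 1 <= / y) by (rewrite <- Rinv_1; apply Rinv_le_contravar; lra).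
  pose proof (cc_bound (/ y) N Hy1) as H.
  rewrite Rinv_inv in H. replace (/ (/ y)^2) with (y^2) in H by (field; lra).
  destruct (Rlt_dec _ _) as [h|h] in H.
  - assert (0 <= 2 / (2 * INR N + 1)).
    { left. apply Rdiv_lt_0_compat; [lra|]. pose proof (pos_INR N); lra. }
    lra.
  - lra.
Qed.

Lemma aser_ex x y : 0 < y <= 1 -> ex_series (aser x y).
Proof.
  intros Hy. apply ex_series_Rabs.
  apply (@ex_series_le R_AbsRing R_CompleteNormedModule _ (fun m => / 6 * cc (/ y) m)).
  { intros m. unfold norm; simpl. rewrite Rabs_Rabsolu. apply aser_abs; auto. }
  assert (Hy0 : 0 < / y) by (apply Rinv_0_lt_compat; lra).
  destruct (ex_finite_lim_seq_incr (sum_n (fun m => / 6 * cc (/ y) m)) (/ 6 * (y + y^2))) as [l Hl].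
  - intros n. rewrite sum_SnR. pose proof (cc_nonneg (/ y) (S n) Hy0). lra.
  - intros n. rewrite sum_scalR. apply Rmult_le_compat_l; [lra|].
    assert (Hy1 : 1 <= / y) by (rewrite <- Rinv_1; apply Rinv_le_contravar; lra).
    pose proof (cc_bound (/ y) n Hy1) as H.
    rewrite Rinv_inv in H. replace (/ (/ y)^2) with (y^2) in H by (field; lra).
    destruct (Rlt_dec _ _) as [h|h] in H.
    + assert (0 <= 2 / (2 * INR n + 1)).
      { left. apply Rdiv_lt_0_compat; [lra|]. pose proof (pos_INR n); lra. }
      lra.
    + lra.
  - exists l. exact Hl.
Qed.

Lemma K_sym a b : K a b = K b a.
Proof. unfold K. rewrite (Rmult_comm a b). reflexivity. Qed.

Lemma K_bound a b : Rabs (K a b) <= 1/2.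
Proof.
  unfold K. destruct (Req_EM_T _ _). rewrite Rabs_R0; lra.
  pose proof (frac_range (/ (a * b))). apply Rabs_le. lra.
Qed.

Lemma KK_bound a b c : Rabs (K a b * K b c) <= 1/4.
Proof.
  rewrite Rabs_mult. pose proof (K_bound a b). pose proof (K_bound b c).
  pose proof (Rabs_pos (K a b)). pose proof (Rabs_pos (K b c)).
  replace (1/4) with (1/2 * (1/2)) by field. apply Rmult_le_compat; lra.
Qed.

Lemma f_int x y : 0 < x <= 1 -> 0 < y <= 1 -> ex_RInt (fun z => K x z * K z y) 0 1.
Proof.
  intros Hx Hy. apply (integ_glue _ 0 1 (1/4)); [lra| intros; apply KK_bound|].
  intros d Hd.
  destruct (nat_large (/ (d * y))) as [N HN].
  assert (Hdy : 0 < d * y) by nra.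
  assert (HNy : 1 < INR N * y * d).
  { apply Rmult_lt_compat_r with (r := d * y) in HN; auto. rewrite Rinv_l in HN; lra. }
  assert (HN1 : 1 <= INR N * y) by nra.
  assert (Hdel : / (INR N * y) <= d).
  { apply Rlt_le. apply lt_inv; nra. }
  destruct (master_bound x y N Hx Hy HN1) as [E _].
  apply (@ex_RInt_Chasles_2 R_CompleteNormedModule _ (/ (INR N * y))); [|auto].
  split; [auto|lra].
Qed.

Lemma trunc x y N : 0 < x <= 1 -> 0 < y <= 1 -> 1 <= INR N * y ->
  Rabs (K2 x y) <= / (INR N * y) / 4 + (x / 24 + x * (/ (INR N * y))^2 / 24
      + x / (2 * y^2) * Rabs (sum_n (aser x y) N) + x * x * M / (3 * y) + x / 24).
Proof.
  intros Hx Hy HN.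
  set (d := / (INR N * y)).
  assert (Hd0 : 0 < d) by (apply Rinv_0_lt_compat; lra).
  assert (Hd1 : d <= 1) by (unfold d; rewrite <- Rinv_1; apply Rinv_le_contravar; lra).
  destruct (master_bound x y N Hx Hy HN) as [E B]. fold d in E, B.
  pose proof (f_int x y Hx Hy) as F.
  assert (E0 : ex_RInt (fun z => K x z * K z y) 0 d) by (apply (@ex_RInt_Chasles_1 R_CompleteNormedModule _ _ _ 1); [lra|auto]).
  pose proof (RInt_Chasles _ 0 d 1 E0 E) as HC. unfold plus in HC; simpl in HC.
  unfold K2. rewrite <- HC.
  pose proof (abs_RInt_le_const _ 0 d (1/4) ltac:(lra) E0 (fun t _ => KK_bound x t y)).
  pose proof (Rabs_triang (RInt (fun z => K x z * K z y) 0 d) (RInt (fun z => K x z * K z y) d 1)).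
  lra.
Qed.

Lemma sqrt3_facts : 1 < sqrt 3 /\ M / 3 = / (36 * sqrt 3).
Proof.
  assert (Hs : sqrt 3 * sqrt 3 = 3) by (apply sqrt_sqrt; lra).
  assert (Hs0 : 0 < sqrt 3) by (apply sqrt_lt_R0; lra).
  split; [nra|]. unfold M. field. lra.
Qed.

Lemma claim1 x y : 0 < x <= 1 -> 0 < y <= 1 ->
  Rabs (K2 x y) / x <= 1/12 + x / ((36 * sqrt 3) * y) + / (2 * y^2) * Rabs (tail_sum x y).
Proof.
  intros Hx Hy. apply Rle_plus_epsilon. intros eps Heps.
  pose proof (Series_correct _ (aser_ex x y Hy)) as HS.
  change (tail_sum x y) with (Series (aser x y)).
  set (S := Series (aser x y)) in *.
  assert (He2 : 0 < eps * y^2) by (apply Rmult_lt_0_compat; nra).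
  destruct (proj1 (filterlim_locally _ _) HS (mkposreal _ He2)) as [N0 HN0].
  destruct (nat_large (/ (eps * x * y) + / y)) as [N1 HN1].
  set (N := max N0 N1).
  assert (HNN : INR N1 <= INR N) by (apply le_INR; lia).
  assert (Hey : 0 < eps * x * y) by (apply Rmult_lt_0_compat; [nra|lra]).
  assert (Hiy : 0 < / y) by (apply Rinv_0_lt_compat; lra).
  assert (Hie : 0 < / (eps * x * y)) by (apply Rinv_0_lt_compat; lra).
  assert (HNy : 1 <= INR N * y).
  { assert (/ y < INR N) by lra. apply Rmult_lt_compat_r with (r := y) in H; [|lra].
    rewrite Rinv_l in H; lra. }
  assert (Hdel : / (INR N * y) < eps * x).
  { apply lt_inv; [nra|]. assert (/ (eps * x * y) < INR N) by lra.
    apply Rmult_lt_compat_r with (r := eps * x * y) in H; [|lra]. rewrite Rinv_l in H; [|lra].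
    replace (eps * x * (INR N * y)) with (INR N * (eps * x * y)) by ring. lra. }
  set (d := / (INR N * y)) in *.
  assert (Hd0 : 0 < d) by (apply Rinv_0_lt_compat; lra).
  assert (Hd1 : d <= 1) by (unfold d; rewrite <- Rinv_1; apply Rinv_le_contravar; lra).
  pose proof (trunc x y N Hx Hy HNy) as T. fold d in T.
  specialize (HN0 N ltac:(unfold N; lia)). unfold ball in HN0; simpl in HN0.
  unfold AbsRing_ball, abs, minus, plus, opp in HN0; simpl in HN0.
  set (SN := sum_n (aser x y) N) in *.
  assert (HSN : Rabs SN <= Rabs S + eps * y^2).
  { assert (HN0p : Rabs (SN - S) < eps * y^2) by (unfold SN, Rminus; replace (y^2) with (y*(y*1)) by ring; exact HN0).
    pose proof (Rabs_triang_inv SN S). lra. }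
  destruct sqrt3_facts as [Hs3 HM].
  replace (x / ((36 * sqrt 3) * y)) with (x * (M / 3) / y) by (rewrite HM; field; repeat split; lra).
  apply (Rmult_le_reg_r x); [lra|]. unfold Rdiv at 1. rewrite Rmult_assoc, Rinv_l, Rmult_1_r by lra.
  eapply Rle_trans; [exact T|].
  assert (E1 : x / (2 * y ^ 2) * Rabs SN <= x / (2 * y^2) * (Rabs S + eps * y^2)).
  { apply Rmult_le_compat_l; [|auto]. left. apply Rdiv_lt_0_compat; nra. }
  replace (x / (2 * y^2) * (Rabs S + eps * y^2)) with (x * (/ (2 * y^2) * Rabs S) + x * eps / 2) in E1
    by (field; lra).
  replace (x * (M / 3) / y) with (x * M / (3 * y)) by (field; lra).
  assert (E2 : d / 4 + x * d^2 / 24 <= x * eps / 2).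
  { assert (d^2 <= d) by nra. assert (x * d^2 <= x * d) by nra. nra. }
  assert (E3 : x * x * M / (3 * y) = x * (x * M / (3 * y))) by (field; lra).
  nra.
Qed.

Lemma claim2_aux x y : 0 < x <= 1 -> 0 < y <= 1 -> x <= y ->
  Rabs (K2 x y) <= (1/4 + / (36 * sqrt 3)) * (x / y).
Proof.
  intros Hx Hy Hxy. apply Rle_plus_epsilon. intros eps Heps.
  destruct (nat_large (/ (eps * y) + / y)) as [N HN1].
  assert (Hey : 0 < eps * y) by (apply Rmult_lt_0_compat; lra).
  assert (Hiy : 0 < / y) by (apply Rinv_0_lt_compat; lra).
  assert (Hie : 0 < / (eps * y)) by (apply Rinv_0_lt_compat; lra).
  assert (HNy : 1 <= INR N * y).
  { assert (/ y < INR N) by lra. apply Rmult_lt_compat_r with (r := y) in H; [|lra].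
    rewrite Rinv_l in H; lra. }
  assert (Hdel : / (INR N * y) < eps).
  { apply lt_inv; [nra|]. assert (/ (eps * y) < INR N) by lra.
    apply Rmult_lt_compat_r with (r := eps * y) in H; [|lra]. rewrite Rinv_l in H; [|lra].
    replace (eps * (INR N * y)) with (INR N * (eps * y)) by ring. lra. }
  set (d := / (INR N * y)) in *.
  assert (Hd0 : 0 < d) by (apply Rinv_0_lt_compat; lra).
  assert (Hd1 : d <= 1) by (unfold d; rewrite <- Rinv_1; apply Rinv_le_contravar; lra).
  pose proof (trunc x y N Hx Hy HNy) as T. fold d in T.
  pose proof (Sabs_bound x y N Hy) as SB.
  set (SN := Rabs (sum_n (aser x y) N)) in *.
  destruct sqrt3_facts as [Hs3 HM]. rewrite <- HM.
  assert (E1 : x / (2 * y ^ 2) * SN <= x / 12 + x / (12 * y)).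
  { apply Rle_trans with (x / (2 * y ^ 2) * (/ 6 * (y + y ^ 2))).
    - apply Rmult_le_compat_l; [left; apply Rdiv_lt_0_compat; nra|auto].
    - right. field. lra. }
  assert (E2 : x / 12 <= x / (12 * y)).
  { apply frac_le; nra. }
  assert (E3 : x * x * M / (3 * y) <= M / 3 * (x / y)).
  { pose proof M_pos. replace (x * x * M / (3 * y)) with (x * (M / 3 * (x / y))) by (field; lra).
    assert (0 <= M / 3 * (x / y)) by (apply Rmult_le_pos; [lra|left; apply Rdiv_lt_0_compat; lra]).
    nra. }
  assert (E4 : d / 4 + x * d^2 / 24 <= eps).
  { assert (d^2 <= d) by nra. assert (x * d^2 <= d) by nra. nra. }
  assert (E5 : x / (12 * y) = 1/12 * (x / y)) by (field; lra).
  lra.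
Qed.

Lemma K2_sym x y : K2 x y = K2 y x.
Proof.
  unfold K2. apply RInt_ext. intros z _. rewrite (K_sym x z), (K_sym z y). apply Rmult_comm.
Qed.

Lemma claim2 x y : 0 < x <= 1 -> 0 < y <= 1 ->
  Rabs (K2 x y) <= (1/4 + / (36 * sqrt 3)) * (Rmin x y / Rmax x y).
Proof.
  intros Hx Hy. destruct (Rle_dec x y) as [h|h].
  - rewrite Rmin_left, Rmax_right by lra. apply claim2_aux; auto.
  - rewrite Rmin_right, Rmax_left by lra. rewrite K2_sym. apply claim2_aux; auto; lra.
Qed.

Lemma is_RInt_constR c a b : is_RInt (fun _ => c) a b ((b - a) * c).
Proof.
  pose proof (is_RInt_const a b c) as H0. unfold scal in H0; simpl in H0; unfold mult in H0; simpl in H0.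
  exact H0.
Qed.

Lemma claim3 x : 0 < x <= 1 -> Rabs (K2 x x - 1/12) <= (1/6 + / (36 * sqrt 3)) * x.
Proof.
  intros Hx.
  destruct (nat_large (3 / (x * x) + / x)) as [N HN1].
  assert (Hix : 0 < / x) by (apply Rinv_0_lt_compat; lra).
  assert (Hxx : 0 < 3 / (x * x)) by (apply Rdiv_lt_0_compat; nra).
  assert (HNy : 1 <= INR N * x).
  { assert (/ x < INR N) by lra. apply Rmult_lt_compat_r with (r := x) in H; [|lra].
    rewrite Rinv_l in H; lra. }
  assert (Hdel : / (INR N * x) <= x / 3).
  { left. apply lt_inv; [nra|]. assert (3 / (x * x) < INR N) by lra.
    apply Rmult_lt_compat_r with (r := x * x / 3) in H; [|nra].
    replace (3 / (x * x) * (x * x / 3)) with 1 in H by (field; lra).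
    replace (x / 3 * (INR N * x)) with (INR N * (x * x / 3)) by field. lra. }
  set (d := / (INR N * x)) in *.
  assert (Hd0 : 0 < d) by (apply Rinv_0_lt_compat; lra).
  assert (Hd1 : d <= 1) by lra.
  pose proof (f_int x x Hx Hx) as F.
  assert (E0 : ex_RInt (fun z => K x z * K z x) 0 d) by (apply (@ex_RInt_Chasles_1 R_CompleteNormedModule _ _ _ 1); [lra|auto]).
  assert (E1 : ex_RInt (fun z => K x z * K z x) d 1) by (apply (@ex_RInt_Chasles_2 R_CompleteNormedModule _ 0 d 1); [lra|auto]).
  pose proof (RInt_Chasles _ 0 d 1 E0 E1) as HC. unfold plus in HC; simpl in HC.
  pose proof (is_RInt_lin _ _ _ _ _ _ 1 (is_RInt_constR (1/12) d 1)
     (@RInt_correct R_CompleteNormedModule _ _ _ (I5 x d 1 ltac:(lra) ltac:(lra)))) as H1.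
  assert (H1' : is_RInt (fun z => K x z * K z x) d 1 ((1 - d) * (1/12) + 1 * RInt (fun z => P (frac (/ (x * z)))) d 1)).
  { eapply is_RInt_ext; [|exact H1]. rewrite Rmin_left, Rmax_right by lra. intros z Hz. simpl.
    rewrite (K_sym z x), Kxz by lra. unfold P. field. }
  unfold K2. rewrite <- HC, (is_RInt_unique _ _ _ _ H1').
  pose proof (abs_RInt_le_const _ 0 d (1/4) ltac:(lra) E0 (fun t _ => KK_bound x t x)) as B0.
  pose proof (RP_bound x d ltac:(lra) ltac:(lra)) as BP.
  set (r0 := RInt (fun z => K x z * K z x) 0 d) in *.
  set (rp := RInt (fun z => P (frac (/ (x * z)))) d 1) in *.
  destruct sqrt3_facts as [Hs3 HM].
  assert (Hc : / (36 * sqrt 3) <= 1/36).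
  { apply Rmult_le_reg_r with (36 * sqrt 3); [lra|]. rewrite Rinv_l by lra. lra. }
  replace (/ (36 * sqrt 3)) with (M / 3) in * by auto.
  apply Rabs_le_between in B0. apply Rabs_le_between in BP.
  apply Rabs_le. split; nra.
Qed.

Theorem lemma2p4 :
  forall x y : R, 0 < x <= 1 -> 0 < y <= 1 ->
    Rabs (K2 x y) / x
      <= 1/12 + x / ((36 * sqrt 3) * y) + / (2 * y^2) * Rabs (tail_sum x y)
    /\ Rabs (K2 x y) <= (1/4 + / (36 * sqrt 3)) * (Rmin x y / Rmax x y)
    /\ Rabs (K2 x x - 1/12) <= (1/6 + / (36 * sqrt 3)) * x.
Proof.
  intros x y Hx Hy. split; [apply claim1; auto|split; [apply claim2; auto|apply claim3; auto]].
Qed.
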